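(* Let $k$ be a field, $V$ a $k$-vector space and $\varphi,\psi\in\mathrm{End}_k(V)$ finite potent endomorphisms such that $\varphi\psi-\psi\varphi$ has finite rank. Then $\langle\varphi,\psi\rangle:=\varphi\,k[\varphi,\psi]+\psi\,k[\varphi,\psi]$ is a finite potent subspace of $\mathrm{End}_k(V)$.
   Context: An endomorphism $\varphi$ of $V$ is finite potent if $\varphi^nV$ is finite dimensional for some $n$. $k[\varphi,\psi]$ denotes the $k$-subalgebra of $\mathrm{End}_k(V)$ generated by $\varphi$ and $\psi$. A subspace $F\subseteq\mathrm{End}_k(V)$ is finite potent if there is $n$ such that for any $\varphi_1,\dots,\varphi_n\in F$ the space $\varphi_1\cdots\varphi_nV$ is finite dimensional. *)

(* Defs.v *)
From HB Require Import structures.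
From mathcomp Require Import all_boot all_order all_algebra.
Set Implicit Arguments. Unset Strict Implicit. Unset Printing Implicit Defensive.
Import GRing.Theory.
Local Open Scope ring_scope.

Section Defs.
Variables (k : fieldType) (V : lmodType k).

(* For a subspace (e.g. an image of a
   linear map) this is exactly "S is finite dimensional". *)
Definition fin_dim (S : V -> Prop) : Prop :=
  exists s : seq V, forall x, S x ->
    exists c : 'I_(size s) -> k, x = \sum_(i < size s) c i *: s`_i.

Definition image_of (f : V -> V) : V -> Prop := fun x => exists v, x = f v.

Definition finite_rank (f : V -> V) : Prop := fin_dim (image_of f).

Definition finite_potent (f : V -> V) : Prop :=
  exists n : nat, fin_dim (image_of (iter n f)).

Inductive in_kalg (phi psi : V -> V) : (V -> V) -> Prop :=
  | kalg_id : in_kalg phi psi id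
  | kalg_phi : in_kalg phi psi phi
  | kalg_psi : in_kalg phi psi psi
  | kalg_add f g : in_kalg phi psi f -> in_kalg phi psi g ->
      in_kalg phi psi (fun x => f x + g x)
  | kalg_scale (a : k) f : in_kalg phi psi f ->
      in_kalg phi psi (fun x => a *: f x)
  | kalg_comp f g : in_kalg phi psi f -> in_kalg phi psi g ->
      in_kalg phi psi (f \o g).

Definition gen_space (phi psi : V -> V) : (V -> V) -> Prop :=
  fun f => exists a b, in_kalg phi psi a /\ in_kalg phi psi b /\
    f = (fun x => phi (a x) + psi (b x)).

Definition finite_potent_space (F : (V -> V) -> Prop) : Prop :=
  exists n : nat, forall fs : seq (V -> V), size fs = n ->
    (forall i, (i < size fs)%N -> F (nth id fs i)) ->
    fin_dim (image_of (foldr (fun f g => f \o g) id fs)).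

End Defs.

(* Main.v *)
Require Import Defs.
From HB Require Import structures.
From mathcomp Require Import all_boot all_order all_algebra.
From mathcomp Require Import zify.
Import GRing.Theory.
Local Open Scope ring_scope.
Set Implicit Arguments. Unset Strict Implicit.

Section Aux.
Variables (k : fieldType) (V : lmodType k).

Fixpoint inspan (s : seq V) (x : V) : Prop :=
  match s with [::] => x = 0 | v :: s' => exists a : k, inspan s' (x - a *: v) end.

Definition lin (f : V -> V) := (forall x y, f (x + y) = f x + f y) /\
  (forall (a : k) x, f (a *: x) = a *: f x).

Lemma inspan_scale s x (c : k) : inspan s x -> inspan s (c *: x).
Proof.
elim: s x => [|v s IH] x /=; first by move->; rewrite scaler0.
case=> a H; exists (c * a); rewrite -scalerA -scalerBr; exact: IH.
Qed.

Lemma inspan_cat s t x y : inspan s x -> inspan t y -> inspan (s ++ t) (x + y).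
Proof.
elim: s x => [|v s IH] x /=; first by move=> -> ?; rewrite add0r.
case=> a H Ht; exists a; rewrite addrAC; exact: IH.
Qed.

Lemma inspan_add s x y : inspan s x -> inspan s y -> inspan s (x + y).
Proof.
elim: s x y => [|v s IH] x y /=; first by move=> -> ->; rewrite addr0.
case=> a Ha [b Hb]; exists (a + b).
have -> : x + y - (a + b) *: v = (x - a *: v) + (y - b *: v).
  by rewrite scalerDl opprD addrACA.
exact: IH.
Qed.

Lemma inspan_map f s x : lin f -> inspan s x -> inspan (map f s) (f x).
Proof.
move=> [fD fZ]; have f0 : f 0 = 0.
  by have := fZ 0 0; rewrite !scale0r.
have fN : forall y, f (- y) = - f y.
  by move=> y; rewrite -scaleN1r fZ scaleN1r.
elim: s x => [|v s IH] x /=; first by move->.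
case=> a H; exists a; move: (IH _ H); by rewrite fD fN fZ.
Qed.

Lemma sum_inspan s x :
  (exists c : 'I_(size s) -> k, x = \sum_(i < size s) c i *: s`_i) <-> inspan s x.
Proof.
elim: s x => [|v s IH] x /=.
  split; first by case=> c ->; rewrite big_ord0.
  by move=> ->; exists (fun _ => 0); rewrite big_ord0.
split.
  case=> c; rewrite big_ord_recl /= => ->; exists (c ord0).
  apply/IH; exists (fun i => c (lift ord0 i)).
  by rewrite [_ *: v + _]addrC addrK; apply: eq_bigr.
case=> a /IH [c Hc].
exists (fun i : 'I_(size s).+1 => if unlift ord0 i is Some j then c j else a).
rewrite big_ord_recl unlift_none /=.
under eq_bigr do rewrite liftK.
by rewrite -Hc addrC subrK.
Qed.

Lemma fin_dimP (S : V -> Prop) :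
  fin_dim S <-> exists s, forall x, S x -> inspan s x.
Proof.
split; case=> s Hs; exists s => x /Hs; by move/sum_inspan.
Qed.


Definition frk (f : V -> V) := exists s, forall v, inspan s (f v).

Lemma frk_ext f g : (forall x, f x = g x) -> frk g -> frk f.
Proof. by move=> E [s Hs]; exists s => v; rewrite E. Qed.

Lemma frk0 : frk (fun _ => 0).
Proof. by exists [::]. Qed.

Lemma frk_add f g : frk f -> frk g -> frk (fun x => f x + g x).
Proof. by move=> [s Hs] [t Ht]; exists (s ++ t) => v; apply: inspan_cat. Qed.

Lemma frk_scale (c : k) f : frk f -> frk (fun x => c *: f x).
Proof. by move=> [s Hs]; exists s => v; apply: inspan_scale. Qed.

Lemma frk_sub f g : frk f -> frk g -> frk (fun x => f x - g x).
Proof.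
move=> Hf Hg; apply: frk_add => //; apply: (@frk_ext _ (fun x => (-1) *: g x)).
  by move=> x; rewrite scaleN1r.
exact: frk_scale.
Qed.

Lemma frk_compr f h : frk f -> frk (fun x => f (h x)).
Proof. by move=> [s Hs]; exists s. Qed.

Lemma frk_compl L f : lin L -> frk f -> frk (fun x => L (f x)).
Proof. by move=> HL [s Hs]; exists (map L s) => v; apply: inspan_map. Qed.

Lemma lin0 f : lin f -> f 0 = 0.
Proof. by case=> _ fZ; have := fZ 0 0; rewrite !scale0r. Qed.

Lemma linB f : lin f -> forall x y, f (x - y) = f x - f y.
Proof.
move=> [fD fZ] x y; by rewrite fD -scaleN1r fZ scaleN1r.
Qed.

Definition eqm (f g : V -> V) := frk (fun x => f x - g x).

Lemma eqm_ext f g f1 g1 : (forall x, f x = f1 x) -> (forall x, g x = g1 x) ->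
  eqm f1 g1 -> eqm f g.
Proof. by move=> E1 E2; apply: frk_ext => x; rewrite E1 E2. Qed.

Lemma eqm_refl f : eqm f f.
Proof. by apply: (@frk_ext _ (fun _ => 0)) => [x|]; rewrite ?subrr //; exact: frk0. Qed.

Lemma eqm_sym f g : eqm f g -> eqm g f.
Proof.
move=> H; apply: (@frk_ext _ (fun x => (-1) *: (f x - g x))).
  by move=> x; rewrite scaleN1r opprB.
exact: frk_scale.
Qed.

Lemma eqm_trans f g h : eqm f g -> eqm g h -> eqm f h.
Proof.
move=> H1 H2; apply: (@frk_ext _ (fun x => (f x - g x) + (g x - h x))).
  by move=> x; rewrite addrA subrK.
exact: frk_add.
Qed.

Lemma eqm_add f f' g g' : eqm f f' -> eqm g g' ->
  eqm (fun x => f x + g x) (fun x => f' x + g' x).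
Proof.
move=> H1 H2; apply: (@frk_ext _ (fun x => (f x - f' x) + (g x - g' x))).
  by move=> x; rewrite opprD addrACA.
exact: frk_add.
Qed.

Lemma eqm_scale (c : k) f g : eqm f g -> eqm (fun x => c *: f x) (fun x => c *: g x).
Proof.
move=> H; apply: (@frk_ext _ (fun x => c *: (f x - g x))).
  by move=> x; rewrite scalerBr.
exact: frk_scale.
Qed.

Lemma eqm_compr f g h : eqm f g -> eqm (fun x => f (h x)) (fun x => g (h x)).
Proof. exact: frk_compr. Qed.

Lemma eqm_compl L f g : lin L -> eqm f g -> eqm (fun x => L (f x)) (fun x => L (g x)).
Proof.
move=> HL H; apply: (@frk_ext _ (fun x => L (f x - g x))).
  by move=> x; rewrite linB.
exact: frk_compl.
Qed.

Definition comm (f g : V -> V) := eqm (fun x => f (g x)) (fun x => g (f x)).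

Lemma comm_sym f g : comm f g -> comm g f.
Proof. exact: eqm_sym. Qed.

Lemma lin_id : lin id.
Proof. by []. Qed.

Lemma lin_comp f g : lin f -> lin g -> lin (f \o g).
Proof. by move=> [fD fZ] [gD gZ]; split=> * /=; rewrite ?gD ?fD ?gZ ?fZ. Qed.

Section Alg.
Variables phi psi : V -> V.

Lemma kalg_lin f : lin phi -> lin psi -> in_kalg phi psi f -> lin f.
Proof.
move=> Hphi Hpsi; elim => //.
- move=> f1 g1 _ [fD fZ] _ [gD gZ]; split=> *.
    by rewrite fD gD addrACA.
  by rewrite fZ gZ scalerDr.
- move=> a f1 _ [fD fZ]; split=> *; first by rewrite fD scalerDr.
  by rewrite fZ !scalerA mulrC.
- by move=> f1 g1 _ H1 _ H2; exact: lin_comp.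
Qed.

Lemma kalg_iter n a : in_kalg phi psi a -> in_kalg phi psi (iter n a).
Proof.
move=> Ha; elim: n => [|n IH]; first exact: kalg_id.
exact: (kalg_comp Ha IH).
Qed.

Lemma comm_gen c : lin phi -> lin psi -> lin c -> comm c phi -> comm c psi ->
  forall a, in_kalg phi psi a -> comm c a.
Proof.
move=> Hphi Hpsi Hc Cphi Cpsi; have [cD cZ] := Hc; move=> a0; elim => //.
- exact: eqm_refl.
- move=> f g _ Hf _ Hg.
  apply: (@eqm_ext _ _ (fun x => c (f x) + c (g x)) (fun x => f (c x) + g (c x))); try by move=> x; rewrite ?cD.
  exact: eqm_add.
- move=> a f _ Hf.
  apply: (@eqm_ext _ _ (fun x => a *: c (f x)) (fun x => a *: f (c x))); try by move=> x; rewrite ?cZ.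
  exact: eqm_scale.
- move=> f g Kf Hf _ Hg.
  apply: (@eqm_trans _ (fun x => f (c (g x)))).
    exact: (@eqm_compr _ _ g Hf).
  exact: (@eqm_ext _ _ _ _ (fun x => erefl) (fun x => erefl) (eqm_compl (kalg_lin Hphi Hpsi Kf) Hg)).
Qed.

Lemma comm_all : lin phi -> lin psi -> comm phi psi ->
  forall a b, in_kalg phi psi a -> in_kalg phi psi b -> comm a b.
Proof.
move=> Hphi Hpsi C a b Ha; elim: Ha b => //.
- move=> b _; exact: eqm_refl.
- move=> b Hb; apply: (@comm_gen phi) => //; exact: eqm_refl.
- move=> b Hb; apply: (@comm_gen psi) => //; try exact: eqm_refl.
  exact: comm_sym.
- move=> f g _ Hf _ Hg b Hb; have [bD bZ] := kalg_lin Hphi Hpsi Hb.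
  apply: (@eqm_ext _ _ (fun x => f (b x) + g (b x)) (fun x => b (f x) + b (g x))); try by move=> x; rewrite ?bD.
  exact: eqm_add (Hf b Hb) (Hg b Hb).
- move=> a1 f _ Hf b Hb; have [bD bZ] := kalg_lin Hphi Hpsi Hb.
  apply: (@eqm_ext _ _ (fun x => a1 *: f (b x)) (fun x => a1 *: b (f x))); try by move=> x; rewrite ?bZ.
  exact: eqm_scale (Hf b Hb).
- move=> f g Kf Hf _ Hg b Hb.
  apply: (@eqm_trans _ (fun x => f (b (g x)))).
    exact: (@eqm_ext _ _ _ _ (fun x => erefl) (fun x => erefl) (eqm_compl (kalg_lin Hphi Hpsi Kf) (Hg b Hb))).
  exact: (@eqm_ext _ _ _ _ (fun x => erefl) (fun x => erefl) (@eqm_compr _ _ g (Hf b Hb))).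
Qed.

Definition S p q (g : V -> V) := exists X Y F, frk F /\
  forall x, g x = iter p phi (X x) + iter q psi (Y x) + F x.

Lemma lin_iter n f : lin f -> lin (iter n f).
Proof.
move=> Hf; elim: n => [|n IH]; first by split.
exact: (lin_comp Hf IH).
Qed.

Lemma kalg_iter_phi n : in_kalg phi psi (iter n phi).
Proof. by apply: kalg_iter; constructor. Qed.
Lemma kalg_iter_psi n : in_kalg phi psi (iter n psi).
Proof. by apply: kalg_iter; constructor. Qed.

Lemma S_ext p q g g' : (forall x, g x = g' x) -> S p q g' -> S p q g.
Proof. by move=> E [X [Y [F [HF E']]]]; exists X, Y, F; split=> // x; rewrite E. Qed.

Lemma S_add p q g1 g2 : lin phi -> lin psi -> S p q g1 -> S p q g2 ->
  S p q (fun x => g1 x + g2 x).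
Proof.
move=> Hphi Hpsi [X1 [Y1 [F1 [HF1 E1]]]] [X2 [Y2 [F2 [HF2 E2]]]].
exists (fun x => X1 x + X2 x), (fun x => Y1 x + Y2 x), (fun x => F1 x + F2 x).
split; first exact: frk_add.
move=> x; have [pD _] := lin_iter p Hphi; have [qD _] := lin_iter q Hpsi.
rewrite E1 E2 pD qD addrACA; congr (_ + _); exact: addrACA.
Qed.

Lemma S_eqm p q g g' : eqm g g' -> S p q g' -> S p q g.
Proof.
move=> H [X [Y [F [HF E]]]]; exists X, Y, (fun x => F x + (g x - g' x)).
split; first exact: frk_add.
by move=> x; rewrite addrA -E addrC subrK.
Qed.

Lemma S_fr p q F : lin phi -> lin psi -> frk F -> S p q F.
Proof.
move=> Hphi Hpsi HF; exists (fun _ => 0), (fun _ => 0), F; split=> // x.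
by rewrite (lin0 (lin_iter p Hphi)) (lin0 (lin_iter q Hpsi)) !add0r.
Qed.

Lemma S0l q g : lin psi -> S 0 q g.
Proof.
move=> Hpsi; exists g, (fun _ => 0), (fun _ => 0); split; first exact: frk0.
by move=> x; rewrite (lin0 (lin_iter q Hpsi)) !addr0.
Qed.

Lemma S0r p g : lin phi -> S p 0 g.
Proof.
move=> Hphi; exists (fun _ => 0), g, (fun _ => 0); split; first exact: frk0.
by move=> x; rewrite (lin0 (lin_iter p Hphi)) addr0 add0r.
Qed.

Lemma S_phi p q X : lin psi -> S p q (fun x => iter p phi (X x)).
Proof.
move=> Hpsi; exists X, (fun _ => 0), (fun _ => 0); split; first exact: frk0.
by move=> x; rewrite (lin0 (lin_iter q Hpsi)) !addr0.
Qed.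

Lemma S_psi p q Y : lin phi -> S p q (fun x => iter q psi (Y x)).
Proof.
move=> Hphi; exists (fun _ => 0), Y, (fun _ => 0); split; first exact: frk0.
by move=> x; rewrite (lin0 (lin_iter p Hphi)) addr0 add0r.
Qed.

Lemma S_step p q a b h : lin phi -> lin psi -> comm phi psi ->
  in_kalg phi psi a -> in_kalg phi psi b ->
  S p q.+1 h -> S p.+1 q h -> S p.+1 q.+1 (fun x => phi (a (h x)) + psi (b (h x))).
Proof.
move=> Hphi Hpsi C Ha Hb [X [Y [F [HF E1]]]] [X' [Y' [F' [HF' E2]]]].
have CA := comm_all Hphi Hpsi C.
have La := kalg_lin Hphi Hpsi Ha; have Lb := kalg_lin Hphi Hpsi Hb.
have [aD _] := La; have [bD _] := Lb; have [pD _] := Hphi; have [sD _] := Hpsi.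
apply: S_add => //.
- apply: (@S_ext _ _ _ (fun x => phi (a (iter p phi (X x))) + phi (a (iter q.+1 psi (Y x))) + phi (a (F x)))).
    by move=> x; rewrite E1 !aD !pD.
  apply: S_add => //; first apply: S_add => //.
  + apply: (@S_eqm _ _ _ (fun x => iter p.+1 phi (a (X x)))); last exact: S_phi.
    have H := @eqm_compr _ _ X (eqm_compl Hphi (CA a (iter p phi) Ha (kalg_iter_phi p))).
    exact: (@eqm_ext _ _ _ _ (fun x => erefl) (fun x => erefl) H).
  + apply: (@S_eqm _ _ _ (fun x => iter q.+1 psi (phi (a (Y x))))); last exact: S_psi.
    have H := @eqm_compr _ _ Y (CA (phi \o a) (iter q.+1 psi) (kalg_comp (kalg_phi _ _) Ha) (kalg_iter_psi q.+1)).
    exact: (@eqm_ext _ _ _ _ (fun x => erefl) (fun x => erefl) H).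
  + apply: S_fr => //; apply: frk_compl => //; exact: frk_compl.
- apply: (@S_ext _ _ _ (fun x => psi (b (iter p.+1 phi (X' x))) + psi (b (iter q psi (Y' x))) + psi (b (F' x)))).
    by move=> x; rewrite E2 !bD !sD.
  apply: S_add => //; first apply: S_add => //.
  + apply: (@S_eqm _ _ _ (fun x => iter p.+1 phi (psi (b (X' x))))); last exact: S_phi.
    have H := @eqm_compr _ _ X' (CA (psi \o b) (iter p.+1 phi) (kalg_comp (kalg_psi _ _) Hb) (kalg_iter_phi p.+1)).
    exact: (@eqm_ext _ _ _ _ (fun x => erefl) (fun x => erefl) H).
  + apply: (@S_eqm _ _ _ (fun x => iter q.+1 psi (b (Y' x)))); last exact: S_psi.
    have H := @eqm_compr _ _ Y' (eqm_compl Hpsi (CA b (iter q psi) Hb (kalg_iter_psi q))).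
    exact: (@eqm_ext _ _ _ _ (fun x => erefl) (fun x => erefl) H).
  + apply: S_fr => //; apply: frk_compl => //; exact: frk_compl.
Qed.

End Alg.
End Aux.

Lemma foldr_S (k : fieldType) (V : lmodType k) (phi psi : V -> V) :
  lin phi -> lin psi -> comm phi psi ->
  forall fs : seq (V -> V),
  (forall i, (i < size fs)%N -> gen_space phi psi (nth id fs i)) ->
  forall p q, (p + q <= size fs + 1)%N ->
  S phi psi p q (foldr (fun f g => f \o g) id fs).
Proof.
move=> Hphi Hpsi C; elim=> [|f fs IH] Hall p q Hpq.
- case: p Hpq => [|p] Hpq; first exact: S0l.
  case: q Hpq => [|q] Hpq; first exact: S0r.
  exfalso; move: Hpq => /=; lia.
- case: p Hpq => [|p] Hpq; first exact: S0l.
  case: q Hpq => [|q] Hpq; first exact: S0r.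
  have [a [b [Ha [Hb Hf]]]] := Hall 0%N isT.
  have Hall' : forall i, (i < size fs)%N -> gen_space phi psi (nth id fs i).
    by move=> i Hi; exact: (Hall i.+1 Hi).
  apply: (@S_ext _ _ _ _ _ _ _ (fun x => phi (a (foldr (fun f g => f \o g) id fs x)) +
      psi (b (foldr (fun f g => f \o g) id fs x)))).
    by move=> x; move: Hf => /= ->.
  apply: S_step => //; apply: IH => //; move: Hpq => /=; lia.
Qed.

Unset Implicit Arguments.

Theorem lemma3p4 (k : fieldType) (V : lmodType k) (phi psi : {linear V -> V}) :
  finite_potent phi -> finite_potent psi ->
  finite_rank (fun x => phi (psi x) - psi (phi x)) ->
  finite_potent_space (gen_space phi psi).
Proof.
move=> [n Hn] [m Hm] Hc.
have Hphi : lin (phi : V -> V) by split => *; rewrite ?linearD ?linearZ.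
have Hpsi : lin (psi : V -> V) by split => *; rewrite ?linearD ?linearZ.
have C : comm (phi : V -> V) psi.
  move/fin_dimP: Hc => [s Hs]; exists s => v; apply: Hs; by exists v.
exists (n + m)%N => fs Hsize Hall.
have Hle : (n + m <= size fs + 1)%N by rewrite Hsize; lia.
have [X [Y [F [[s3 H3] E]]]] := foldr_S Hphi Hpsi C Hall Hle.
apply/fin_dimP; move/fin_dimP: Hn => [s1 H1]; move/fin_dimP: Hm => [s2 H2].
exists (s1 ++ s2 ++ s3) => _ [v ->]; rewrite E -addrA.
apply: inspan_cat; first by apply: H1; exists (X v).
apply: inspan_cat; last exact: H3.
by apply: H2; exists (Y v).
Qed.
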